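(* Let $r\ge1$ and let $\tau,\tau'$ be permutations of $F^r$ fixing $\mathbf 0$, such that $S_\tau$ and $S_{\tau'}$ are transitive codes of length $2^{r+1}$. Then there exist a vector $x\in F^{2^{r+1}}$ and a permutation $\pi$ of coordinates with $x+\pi(S_\tau)=S_{\tau'}$ if and only if there exists a permutation $\pi'$ of the points with $SQS_\tau\sim_{\pi'}SQS_{\tau'}$.
   Context: $F=\mathrm{GF}(2)$, $\mathbf 0$ is the all-zero vector. Index the coordinates of $F^{2^r}$ by the vectors of $F^r$; $e_a$ is the unit vector at position $a$. $\mathcal H=\{x\in F^{2^r}:\sum_{a:x_a=1}a=\mathbf 0,\ \mathrm{wt}(x)\text{ even}\}$ is the extended Hamming code. For $x,y\in F^{2^r}$, $x|y$ is the concatenation and $C\times D=\{x|y:x\in C,y\in D\}$. $S_\tau=\bigcup_{a\in F^r}(\mathcal H+e_a+e_{\mathbf 0})\times(\mathcal H+e_{\tau(a)}+e_{\tau(\mathbf 0)})\subseteq F^{2^{r+1}}$. Coordinate positions of $F^{2^{r+1}}$ are denoted $(\{a\},\emptyset)$ (first half) and $(\emptyset,\{a\})$ (second half); $(X,Y)$ denotes the set of positions $\{(\{x\},\emptyset):x\in X\}\cup\{(\emptyset,\{y\}):y\in Y\}$. $SQS_\tau$ consists of the quadruples $Q_0=\{(\{a,b,c,d\},\emptyset): a,b,c,d \text{ pairwise distinct}, a+b+c+d=\mathbf 0\}$, $Q_1=\{(\emptyset,\{a,b,c,d\}): \text{same condition}\}$, $Q_\tau=\{(\{a,c\},\{b,d\}):\tau(a+c)=b+d\neq\mathbf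 0\}$. $SQS_\tau\sim_{\pi'}SQS_{\tau'}$ means $\pi'$ maps the quadruples of $SQS_\tau$ onto those of $SQS_{\tau'}$. Permutations act on vectors by $\pi(y)_i=y_{\pi^{-1}(i)}$. A code $C$ is transitive if the group $\{y\mapsto x+\pi(y)\}$ stabilizer $\mathrm{Aut}(C)$ of $C$ has a subgroup acting transitively on $C$. *)

(* Defs.v *)
From mathcomp Require Import all_boot all_order all_algebra all_fingroup.
Set Implicit Arguments. Unset Strict Implicit. Unset Printing Implicit Defensive.
Import GRing.Theory.
Local Open Scope ring_scope.

Notation V r := ('rV['F_2]_r).
(* words of length 2^r: coordinates indexed by F^r *)
Notation W r := ({ffun V r -> 'F_2}).
(* coordinate positions of F^{2^{r+1}}: inl a = ({a},∅), inr a = (∅,{a}) *)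
Notation P r := ((V r + V r)%type).
Notation W2 r := ({ffun P r -> 'F_2}).

Definition unitv r (a : V r) : W r := [ffun b => (b == a)%:R].
Definition wt r (x : W r) : nat := #|[set a | x a != 0]|.

Definition Ham r : {set W r} :=
  [set x : W r | ((\sum_(a | x a == 1) (a : 'rV['F_2]_r)) == 0) && ~~ odd (wt x)].

Definition coset r (C : {set W r}) (v : W r) : {set W r} := [set (c : W r) + v | c in C].

Definition concat r (x y : W r) : W2 r :=
  [ffun i : P r => match i with inl a => x a | inr b => y b end].

Definition Sc r (tau : {perm V r}) : {set W2 r} :=
  \bigcup_(a : V r)
    [set concat x y | x in coset (Ham r) (unitv a + unitv 0),
                      y in coset (Ham r) (unitv (tau a) + unitv (tau 0))].

Definition permw r (pi : {perm P r}) (y : W2 r) : W2 r := [ffun i => y ((pi^-1)%g i)].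

Definition isoms r : {set {perm W2 r}} :=
  [set g : {perm W2 r} | [exists x : W2 r, exists pi : {perm P r},
                          [forall y, g y == x + permw pi y]]].
Definition Aut r (C : {set W2 r}) : {set {perm W2 r}} :=
  [set g in isoms r | g @: C == C].
Definition transitive_code r (C : {set W2 r}) : Prop :=
  exists G : {group {perm W2 r}}, G \subset Aut C /\ [transitive G, on C | 'P].

Definition SQS r (tau : {perm V r}) : {set {set P r}} :=
  [set Q : {set P r} |
    [exists a : V r, exists b : V r, exists c : V r, exists d : V r,
      ([&& a != b, a != c, a != d, b != c, b != d, c != d & a + b + c + d == 0]
         && ((Q == [set inl a; inl b; inl c; inl d])
             || (Q == [set inr a; inr b; inr c; inr d])))
      || ((tau (a + c) == b + d) && (b + d != 0)
          && (Q == [set inl a; inl c; inr b; inr d]))]].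

Definition sqs_equiv r (pi' : {perm P r}) (S1 S2 : {set {set P r}}) : Prop :=
  [set pi' @: (Q : {set P r}) | Q in S1] = S2.

(* Main.v *)
Require Import Defs.
From mathcomp Require Import all_boot all_order all_algebra all_fingroup zify.
Import GRing.Theory.
Local Open Scope ring_scope.
Set Implicit Arguments. Unset Strict Implicit. Unset Printing Implicit Defensive.

Lemma F2_11 : (1 + 1 : 'F_2) = 0. Proof. exact/val_inj. Qed.
Lemma F2_cases (k : 'F_2) : k = 0 \/ k = 1.
Proof. case: k => [[|[|n]]] // Hn; [left|right]; exact/val_inj. Qed.

Lemma addvv {r} (v : V r) : v + v = 0.
Proof. by rewrite -[v]scale1r -scalerDl F2_11 scale0r. Qed.
Lemma addWW {T : finType} (v : {ffun T -> 'F_2}) : v + v = 0.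
Proof. apply/ffunP => i; rewrite !ffunE; case: (F2_cases (v i)) => ->; [by rewrite addr0|exact F2_11]. Qed.
Lemma oppv {r} (v : V r) : - v = v.
Proof. by apply/eqP; rewrite eq_sym -subr_eq0 opprK addvv. Qed.
Lemma natF2 (n : nat) : (n%:R : 'F_2) = (odd n)%:R.
Proof. elim: n => [|n IH] //; rewrite mulrS IH /=.
  case: (odd n) => /=; [by rewrite F2_11|by rewrite addr0]. Qed.

Definition lft {r} (c : W2 r) : W r := [ffun a => c (inl a)].
Definition rgt {r} (c : W2 r) : W r := [ffun a => c (inr a)].
Definition syn {r} (x : W r) : V r := \sum_a x a *: a.
Definition par {r} (x : W r) : 'F_2 := \sum_a x a.

Lemma synD {r} (x y : W r) : syn (x + y) = syn x + syn y.
Proof. by rewrite /syn -big_split; apply: eq_bigr => a _; rewrite ffunE scalerDl. Qed.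
Lemma synB {r} (x y : W r) : syn (x - y) = syn x - syn y.
Proof. by rewrite /syn -sumrB; apply: eq_bigr => a _; rewrite !ffunE scalerBl. Qed.
Lemma parD {r} (x y : W r) : par (x + y) = par x + par y.
Proof. by rewrite /par -big_split; apply: eq_bigr => a _; rewrite ffunE. Qed.
Lemma parB {r} (x y : W r) : par (x - y) = par x - par y.
Proof. by rewrite /par -sumrB; apply: eq_bigr => a _; rewrite !ffunE. Qed.

Lemma syn_unit {r} (a : V r) : syn (unitv a) = a.
Proof.
rewrite /syn (bigD1 a) //= big1 ?addr0; first by rewrite ffunE eqxx scale1r.
by move=> b /negbTE Hb; rewrite ffunE Hb scale0r.
Qed.
Lemma par_unit {r} (a : V r) : par (unitv a) = 1.
Proof.
rewrite /par (bigD1 a) //= big1 ?addr0; first by rewrite ffunE eqxx.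
by move=> b /negbTE Hb; rewrite ffunE Hb.
Qed.

Lemma sum_cond_syn {r} (x : W r) : \sum_(a | x a == 1) a = syn x.
Proof.
rewrite /syn big_mkcond; apply: eq_bigr => a _.
by case: (F2_cases (x a)) => ->; rewrite ?scale0r ?scale1r.
Qed.

Lemma par_wt {r} (x : W r) : par x = (odd (wt x))%:R.
Proof.
rewrite /par /wt -natF2 -sum1_card big_mkcond /= natr_sum.
rewrite [RHS]big_mkcond; apply: eq_bigr => a _.
by rewrite inE; case: (F2_cases (x a)) => ->.
Qed.

Lemma Ham_E {r} (x : W r) : (x \in Ham r) = (syn x == 0) && (par x == 0).
Proof.
rewrite inE sum_cond_syn par_wt; congr (_ && _).
by case: (odd _).
Qed.

Lemma coset_E {r} (v x : W r) :
  (x \in Defs.coset (Ham r) v) = (syn x == syn v) && (par x == par v).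
Proof.
apply/imsetP/andP.
  case=> c; rewrite Ham_E => /andP[/eqP Hs /eqP Hp] ->.
  by rewrite synD parD Hs Hp !add0r.
case=> /eqP Hs /eqP Hp; exists (x - v); last by rewrite subrK.
by rewrite Ham_E synB parB Hs Hp !subrr !eqxx.
Qed.

Definition codeA {r} (tau : {perm V r}) (c : W2 r) :=
  [&& par (lft c) == 0, par (rgt c) == 0 & tau (syn (lft c)) == syn (rgt c)].

Lemma concat_lr {r} (c : W2 r) : concat (lft c) (rgt c) = c.
Proof. by apply/ffunP => -[a|a]; rewrite !ffunE. Qed.
Lemma lft_concat {r} (x y : W r) : lft (concat x y) = x.
Proof. by apply/ffunP => a; rewrite !ffunE. Qed.
Lemma rgt_concat {r} (x y : W r) : rgt (concat x y) = y.
Proof. by apply/ffunP => a; rewrite !ffunE. Qed.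

Lemma Sc_E {r} (tau : {perm V r}) (c : W2 r) : tau 0 = 0 ->
  (c \in Sc tau) = codeA tau c.
Proof.
move=> t0; apply/bigcupP/idP.
  case=> a _ /imset2P[x y]; rewrite !coset_E => /andP[/eqP Hs /eqP Hp]
     /andP[/eqP Hs' /eqP Hp'] ->.
  rewrite /codeA lft_concat rgt_concat Hp Hp' Hs Hs' !synD !parD !syn_unit !par_unit.
  by rewrite t0 !addr0 F2_11 !eqxx.
case/and3P=> /eqP Hp /eqP Hp' /eqP Hs.
exists (syn (lft c)) => //; apply/imset2P.
exists (lft c) (rgt c); last by rewrite concat_lr.
  by rewrite coset_E synD parD !syn_unit !par_unit addr0 F2_11 Hp !eqxx.
by rewrite coset_E synD parD !syn_unit !par_unit t0 addr0 F2_11 Hp' Hs !eqxx.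
Qed.
Set Implicit Arguments. Unset Strict Implicit. Unset Printing Implicit Defensive.
Lemma set4_mem (T : finType) (a b c d : T) : [set a; b; c; d] =i [:: a; b; c; d].
Proof. by move=> x; rewrite !inE -!orbA. Qed.
Lemma set2_mem (T : finType) (a b : T) : [set a; b] =i [:: a; b].
Proof. by move=> x; rewrite !inE. Qed.
Lemma card4 (T : finType) (a b c d : T) : uniq [:: a; b; c; d] -> #|[set a; b; c; d]| = 4%N.
Proof. by move=> U; rewrite (eq_card (set4_mem a b c d)); apply/card_uniqP. Qed.
Lemma card2 (T : finType) (a b : T) : a != b -> #|[set a; b]| = 2%N.
Proof. by move=> U; rewrite (eq_card (set2_mem a b)); apply/card_uniqP; rewrite /= inE U. Qed.
Lemma sum4 (T : finType) (M : zmodType) (F : T -> M) (a b c d : T) : uniq [:: a; b; c; d] ->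
  \sum_(i in [set a; b; c; d]) F i = F a + F b + F c + F d.
Proof. by move=> U; rewrite (eq_bigl _ _ (set4_mem a b c d)) -big_uniq //= !big_cons big_nil addr0 !addrA. Qed.
Lemma sum2 (T : finType) (M : zmodType) (F : T -> M) (a b : T) : a != b ->
  \sum_(i in [set a; b]) F i = F a + F b.
Proof. by move=> U; rewrite (eq_bigl _ _ (set2_mem a b)) -big_uniq /= ?inE ?U // !big_cons big_nil addr0. Qed.
Lemma sumn4 (T : finType) (F : T -> nat) (a b c d : T) : uniq [:: a; b; c; d] ->
  (\sum_(i in [set a; b; c; d]) F i = F a + F b + F c + F d)%N.
Proof. by move=> U; rewrite (eq_bigl _ _ (set4_mem a b c d)) -big_uniq //= !big_cons big_nil addn0 !addnA. Qed.
Lemma card4P (T : finType) (S : {set T}) : #|S| = 4%N ->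
  exists a b c d, uniq [:: a; b; c; d] /\ S = [set a; b; c; d].
Proof.
move=> H; have U := enum_uniq (mem S); have E : size (enum S) = 4%N by rewrite -cardE.
move: U E; have EE : forall x, (x \in enum S) = (x \in S) by move=> x; rewrite mem_enum.
move: EE; case: (enum S) => [|a [|b [|c [|d [|e s]]]]] // EE U _.
exists a, b, c, d; split => //; apply/setP => x; rewrite set4_mem EE //.
Qed.
Lemma imset4 (T T' : finType) (f : T -> T') (a b c d : T) :
  f @: [set a; b; c; d] = [set f a; f b; f c; f d].
Proof. by rewrite !imsetU !imset_set1. Qed.

Definition QL {r} (Q : {set P r}) : {set V r} := [set a | inl a \in Q].
Definition QR {r} (Q : {set P r}) : {set V r} := [set a | inr a \in Q].
Definition ind {r} (Q : {set P r}) : W2 r := [ffun i => (i \in Q)%:R].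

Lemma syn_ind {r} (S : {set V r}) : syn [ffun a => (a \in S)%:R] = \sum_(a in S) a.
Proof. by rewrite /syn [RHS]big_mkcond; apply: eq_bigr => a _; rewrite ffunE; case: (a \in S); rewrite ?scale1r ?scale0r. Qed.
Lemma par_ind {r} (S : {set V r}) : par [ffun a => (a \in S)%:R] = (odd #|S|)%:R.
Proof. by rewrite /par -natF2 -sum1_card natr_sum [RHS]big_mkcond; apply: eq_bigr => a _; rewrite ffunE; case: (a \in S). Qed.
Lemma lft_ind {r} (Q : {set P r}) : lft (ind Q) = [ffun a => (a \in QL Q)%:R].
Proof. by apply/ffunP => a; rewrite !ffunE inE. Qed.
Lemma rgt_ind {r} (Q : {set P r}) : rgt (ind Q) = [ffun a => (a \in QR Q)%:R].
Proof. by apply/ffunP => a; rewrite !ffunE inE. Qed.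

Lemma oddF2 (b : bool) : ((b%:R : 'F_2) == 0) = ~~ b.
Proof. by case: b. Qed.

Lemma ind_Sc {r} (tau : {perm V r}) (Q : {set P r}) : tau 0 = 0 ->
  (ind Q \in Sc tau) = [&& ~~ odd #|QL Q|, ~~ odd #|QR Q| &
                          tau (\sum_(a in QL Q) a) == \sum_(b in QR Q) b].
Proof. by move=> t0; rewrite Sc_E // /codeA lft_ind rgt_ind !par_ind !syn_ind !oddF2. Qed.

Lemma QE {r} (Q : {set P r}) : Q = [set inl a | a in QL Q] :|: [set inr a | a in QR Q].
Proof.
apply/setP => -[x|x]; rewrite inE; apply/idP/orP.
- by move=> H; left; apply/imsetP; exists x; rewrite ?inE.
- by case=> /imsetP[y]; rewrite inE => H [->].
- by move=> H; right; apply/imsetP; exists x; rewrite ?inE.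
- by case=> /imsetP[y]; rewrite inE => H [->].
Qed.

Lemma cardQ {r} (Q : {set P r}) : #|Q| = (#|QL Q| + #|QR Q|)%N.
Proof.
rewrite {1}[Q]QE cardsU (card_imset _ (@inl_inj _ _)) (card_imset _ (@inr_inj _ _)).
suff -> : [set inl a | a in QL Q] :&: [set inr a | a in QR Q] = set0 :> {set P r}
  by rewrite cards0 subn0.
apply/setP => x; rewrite !inE; apply/andP => -[/imsetP[y _ ->] /imsetP[z _]] //.
Qed.

Definition blkA {r} (tau : {perm V r}) (Q : {set P r}) :=
  [&& #|Q| == 4%N, ~~ odd #|QL Q|, ~~ odd #|QR Q| &
      tau (\sum_(a in QL Q) a) == \sum_(b in QR Q) b].

Lemma QL_LLLL {r} (a b c d : V r) : QL [set inl a; inl b; inl c; inl d] = [set a; b; c; d].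
Proof. by apply/setP => x; rewrite !inE. Qed.
Lemma QR_LLLL {r} (a b c d : V r) : QR [set inl a; inl b; inl c; inl d] = set0.
Proof. by apply/setP => x; rewrite !inE. Qed.
Lemma QL_RRRR {r} (a b c d : V r) : QL [set inr a; inr b; inr c; inr d] = set0.
Proof. by apply/setP => x; rewrite !inE. Qed.
Lemma QR_RRRR {r} (a b c d : V r) : QR [set inr a; inr b; inr c; inr d] = [set a; b; c; d].
Proof. by apply/setP => x; rewrite !inE. Qed.
Lemma QL_LLRR {r} (a b c d : V r) : QL [set inl a; inl c; inr b; inr d] = [set a; c].
Proof. by apply/setP => x; rewrite !inE !orbF. Qed.
Lemma QR_LLRR {r} (a b c d : V r) : QR [set inl a; inl c; inr b; inr d] = [set b; d].
Proof. by apply/setP => x; rewrite !inE. Qed.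

Lemma uniq4_inl {r} (a b c d : V r) : uniq [:: a; b; c; d] ->
  uniq ([:: inl a; inl b; inl c; inl d] : seq (P r)).
Proof. by rewrite /= !inE. Qed.
Lemma uniq4_inr {r} (a b c d : V r) : uniq [:: a; b; c; d] ->
  uniq ([:: inr a; inr b; inr c; inr d] : seq (P r)).
Proof. by rewrite /= !inE. Qed.
Lemma uniq4_LLRR {r} (a b c d : V r) : a != c -> b != d ->
  uniq ([:: inl a; inl c; inr b; inr d] : seq (P r)).
Proof. by move=> H1 H2; rewrite /= !inE !negb_or /= H1 H2. Qed.

Lemma addv_eq0 {r} (a b : V r) : (a + b == 0) = (a == b).
Proof. by rewrite addr_eq0 oppv. Qed.

Lemma perm0 {r} (tau : {perm V r}) x : tau 0 = 0 -> (tau x == 0) = (x == 0).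
Proof. by move=> t0; rewrite -{1}t0 (inj_eq perm_inj). Qed.

Lemma uniq4E (T : eqType) (a b c d : T) : uniq [:: a; b; c; d] =
  [&& a != b, a != c, a != d, b != c, b != d & c != d].
Proof. by rewrite /= !inE !negb_or andbT -!andbA. Qed.

Lemma SQS_E {r} (tau : {perm V r}) (Q : {set P r}) : tau 0 = 0 ->
  (Q \in SQS tau) = blkA tau Q.
Proof.
move=> t0; apply/idP/idP.
  rewrite inE => /existsP[a /existsP[b /existsP[c /existsP[d]]]].
  case/orP => [/andP[H /orP[/eqP->|/eqP->]] | /andP[/andP[/eqP Ht Hbd] /eqP->]].
  - case/and5P: H => H1 H2 H3 H4 /andP[H5 /andP[H6 /eqP H]].
    have U : uniq [:: a; b; c; d] by rewrite uniq4E H1 H2 H3 H4 H5 H6.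
    rewrite /blkA card4 ?uniq4_inl // QL_LLLL QR_LLLL card4 // cards0 sum4 // H t0 big_set0 !eqxx.
    done.
  - case/and5P: H => H1 H2 H3 H4 /andP[H5 /andP[H6 /eqP H]].
    have U : uniq [:: a; b; c; d] by rewrite uniq4E H1 H2 H3 H4 H5 H6.
    rewrite /blkA card4 ?uniq4_inr // QL_RRRR QR_RRRR card4 // cards0 sum4 // H big_set0 t0 !eqxx.
    done.
  - have Hac : a != c.
      apply: contraNneq Hbd => Eac; by rewrite -Ht Eac addvv t0.
    have Hbd' : b != d by rewrite -addv_eq0.
    rewrite /blkA card4 ?uniq4_LLRR // QL_LLRR QR_LLRR !card2 // !sum2 // Ht !eqxx.
    done.
case/and4P => /eqP H4 HL HR /eqP Hs.
have HLR := cardQ Q; rewrite H4 in HLR.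
rewrite inE.
have [E0|NE0] := eqVneq #|QL Q| 0%N.
  have E4 : #|QR Q| = 4%N by rewrite HLR E0.
  case: (card4P E4) => a [b [c [d [U EQ]]]].
  have QL0 : QL Q = set0 by apply/eqP; rewrite -cards_eq0 E0.
  rewrite QL0 big_set0 t0 EQ sum4 // in Hs.
  apply/existsP; exists a; apply/existsP; exists b; apply/existsP; exists c; apply/existsP; exists d.
  apply/orP; left; apply/andP; split.
    by move: U; rewrite uniq4E => /and5P[-> -> -> -> /andP[-> ->]]; rewrite -Hs eqxx.
  apply/orP; right; apply/eqP; rewrite [LHS]QE QL0 EQ imset0 set0U.
  by rewrite imset4.
have [E4|NE4] := eqVneq #|QL Q| 4%N.
  have E0 : #|QR Q| = 0%N by move: HLR; rewrite E4 => /eqP; rewrite -{1}[4%N]addn0 eqn_add2l => /eqP.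
  case: (card4P E4) => a [b [c [d [U EQ]]]].
  have QR0 : QR Q = set0 by apply/eqP; rewrite -cards_eq0 E0.
  rewrite QR0 big_set0 EQ sum4 // -t0 in Hs.
  move/perm_inj: Hs => Hs.
  apply/existsP; exists a; apply/existsP; exists b; apply/existsP; exists c; apply/existsP; exists d.
  apply/orP; left; apply/andP; split.
    by move: U; rewrite uniq4E => /and5P[-> -> -> -> /andP[-> ->]]; rewrite Hs eqxx.
  apply/orP; left; apply/eqP; rewrite [LHS]QE QR0 EQ imset0 setU0.
  by rewrite imset4.
have E2 : #|QL Q| = 2%N.
  move: HL NE0 NE4 (leq_addr #|QR Q| #|QL Q|); rewrite -HLR.
  by case: (#|QL Q|) => [|[|[|[|[|n]]]]].
have E2' : #|QR Q| = 2%N by move/eqP: HLR; rewrite E2; case: (#|QR Q|) => [|[|[|[|n]]]].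
case/cards2P: (introT eqP E2) => a [c [Hac EL]].
case/cards2P: (introT eqP E2') => b [d [Hbd ER]].
rewrite EL ER !sum2 // in Hs.
apply/existsP; exists a; apply/existsP; exists b; apply/existsP; exists c; apply/existsP; exists d.
apply/orP; right; rewrite Hs eqxx addv_eq0 Hbd /=.
apply/eqP; rewrite [LHS]QE EL ER !imsetU !imset_set1.
by apply/setP => x; rewrite !inE !orbA.
Qed.

Lemma SQS_ind {r} (tau : {perm V r}) (Q : {set P r}) : tau 0 = 0 ->
  (Q \in SQS tau) = (#|Q| == 4%N) && (ind Q \in Sc tau).
Proof. by move=> t0; rewrite SQS_E // ind_Sc. Qed.

Lemma permwD {r} (p : {perm P r}) a b : permw p (a + b) = permw p a + permw p b.
Proof. by apply/ffunP => i; rewrite !ffunE. Qed.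
Lemma permwB {r} (p : {perm P r}) a b : permw p (a - b) = permw p a - permw p b.
Proof. by apply/ffunP => i; rewrite !ffunE. Qed.
Lemma permw0 {r} (p : {perm P r}) : permw p 0 = 0.
Proof. by apply/ffunP => i; rewrite !ffunE. Qed.
Lemma permwM {r} (s p : {perm P r}) y : permw (s * p)%g y = permw p (permw s y).
Proof. by apply/ffunP => i; rewrite !ffunE invMg permM. Qed.
Lemma permw_inj {r} (p : {perm P r}) : injective (permw p).
Proof.
move=> a b H; apply/ffunP => i; move/ffunP: H => /(_ (p i)); rewrite !ffunE.
by rewrite -permM mulgV perm1.
Qed.
Lemma mem_imset_perm {T : finType} (p : {perm T}) (Q : {set T}) i :
  (i \in p @: Q) = ((p^-1)%g i \in Q).
Proof. by rewrite -{1}(permKV p i) mem_imset //; apply: perm_inj. Qed.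
Lemma ind_imset {r} (p : {perm P r}) (Q : {set P r}) : ind (p @: Q) = permw p (ind Q).
Proof. by apply/ffunP => i; rewrite !ffunE mem_imset_perm. Qed.
Lemma card_imset_perm {T : finType} (p : {perm T}) (Q : {set T}) : #|p @: Q| = #|Q|.
Proof. by apply: card_imset; apply: perm_inj. Qed.

Lemma code_to_sqs {r} (tau tau' : {perm V r}) (p : {perm P r}) :
  tau 0 = 0 -> tau' 0 = 0 ->
  [set permw p y | y in Sc tau] = Sc tau' -> sqs_equiv p (SQS tau) (SQS tau').
Proof.
move=> t0 t0' H; rewrite /sqs_equiv; apply/setP => Q'; apply/imsetP/idP.
  case=> Q; rewrite SQS_ind // => /andP[H4 HQ] ->.
  by rewrite SQS_ind // card_imset_perm H4 ind_imset -H mem_imset //; apply: permw_inj.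
rewrite SQS_ind // => /andP[H4 HQ]; exists ((p^-1)%g @: Q').
  rewrite SQS_ind // card_imset_perm H4 /=; rewrite -H in HQ.
  case/imsetP: HQ => y Hy E.
  suff -> : ind ((p^-1)%g @: Q') = y by [].
  apply: (@permw_inj _ p); rewrite -E -ind_imset; congr ind.
  by apply/setP => i; rewrite !mem_imset_perm invgK permKV.
by apply/setP => i; rewrite !mem_imset_perm invgK permKV.
Qed.

Lemma zero_Sc {r} (tau : {perm V r}) : tau 0 = 0 -> (0 : W2 r) \in Sc tau.
Proof.
move=> t0; rewrite Sc_E // /codeA.
have L : lft (0 : W2 r) = 0 by apply/ffunP => a; rewrite !ffunE.
have R : rgt (0 : W2 r) = 0 by apply/ffunP => a; rewrite !ffunE.
have S0 : syn (0 : W r) = 0 by rewrite /syn big1 // => a _; rewrite ffunE scale0r.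
have P0 : par (0 : W r) = 0 by rewrite /par big1 // => a _; rewrite ffunE.
by rewrite L R S0 P0 t0 !eqxx.
Qed.

Lemma dir1 {r} (tau tau' : {perm V r}) : tau 0 = 0 -> tau' 0 = 0 ->
  transitive_code (Sc tau) ->
  (exists (x : W2 r) (pi : {perm P r}), [set x + permw pi y | y in Sc tau] = Sc tau') ->
  exists rho : {perm P r}, [set permw rho y | y in Sc tau] = Sc tau'.
Proof.
move=> t0 t0' [G [sGA trG]] [x [pi E]].
have : (0 : W2 r) \in Sc tau' by apply: zero_Sc.
move=> H0; rewrite -E in H0; case/imsetP: H0 => y0 Hy0 E0.
have [g Gg Eg] := atransP2 trG (zero_Sc t0) Hy0.
have := subsetP sGA g Gg; rewrite inE => /andP[].
rewrite inE => /existsP[x1 /existsP[s /forallP Hg]] /eqP gC.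
have Hg' : forall y, g y = x1 + permw s y by move=> y; apply/eqP; apply: Hg.
have Ex1 : x1 = y0 by rewrite Eg /= /aperm Hg' permw0 addr0.
exists (s * pi)%g; apply/setP => c; apply/imsetP/idP.
  case=> y Hy ->; rewrite -E; apply/imsetP; exists (g y).
    by rewrite -gC; apply: imset_f.
  rewrite permwM Hg' Ex1 permwD.
  have -> : x = - permw pi y0 by apply/eqP; rewrite -addr_eq0 -E0.
  by rewrite addrA addNr add0r.
rewrite -E => /imsetP[z]; rewrite -{1}gC => /imsetP[y Hy ->] ->.
exists y => //; rewrite permwM Hg' Ex1 permwD.
have -> : x = - permw pi y0 by apply/eqP; rewrite -addr_eq0 -E0.
by rewrite addrA addNr add0r.
Qed.

Lemma solve2 {r} (a b c : V r) : a = b + c -> c = b + a.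
Proof. by move->; rewrite addrA addvv add0r. Qed.

Lemma set4_swap23 (T : finType) (x1 x2 x3 x4 : T) :
  [set x1; x2; x3; x4] = [set x1; x3; x2; x4].
Proof. by apply/setP => x; rewrite !inE; case: (x == x1); case: (x == x2); case: (x == x3). Qed.

Lemma blkLLLL {r} (tau : {perm V r}) (a b c d : V r) : tau 0 = 0 ->
  uniq [:: a; b; c; d] -> a + b + c + d = 0 -> [set inl a; inl b; inl c; inl d] \in SQS tau.
Proof.
move=> t0 U H; rewrite SQS_E // /blkA card4 ?uniq4_inl // QL_LLLL QR_LLLL card4 // cards0.
by rewrite sum4 // H t0 big_set0 !eqxx.
Qed.
Lemma blkRRRR {r} (tau : {perm V r}) (a b c d : V r) : tau 0 = 0 ->
  uniq [:: a; b; c; d] -> a + b + c + d = 0 -> [set inr a; inr b; inr c; inr d] \in SQS tau.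
Proof.
move=> t0 U H; rewrite SQS_E // /blkA card4 ?uniq4_inr // QL_RRRR QR_RRRR card4 // cards0.
by rewrite big_set0 t0 sum4 // H !eqxx.
Qed.
Lemma blkLLRR {r} (tau : {perm V r}) (a b c d : V r) : tau 0 = 0 ->
  a != c -> b != d -> tau (a + c) = b + d -> [set inl a; inl c; inr b; inr d] \in SQS tau.
Proof.
move=> t0 Hac Hbd H; rewrite SQS_E // /blkA card4 ?uniq4_LLRR // QL_LLRR QR_LLRR !card2 //.
by rewrite !sum2 // H !eqxx.
Qed.
Lemma blkLLLL_inv {r} (tau : {perm V r}) (a b c d : V r) : tau 0 = 0 ->
  uniq [:: a; b; c; d] -> [set inl a; inl b; inl c; inl d] \in SQS tau -> a + b + c + d = 0.
Proof.
move=> t0 U; rewrite SQS_E // => /and4P[_ _ _ /eqP].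
rewrite QL_LLLL QR_LLLL sum4 // big_set0 => H; apply: (@perm_inj _ tau); by rewrite H t0.
Qed.
Lemma blkRRRR_inv {r} (tau : {perm V r}) (a b c d : V r) : tau 0 = 0 ->
  uniq [:: a; b; c; d] -> [set inr a; inr b; inr c; inr d] \in SQS tau -> a + b + c + d = 0.
Proof.
move=> t0 U; rewrite SQS_E // /blkA QL_RRRR QR_RRRR sum4 // big_set0 t0 => /and4P[_ _ _ /eqP].
by move->.
Qed.
Lemma blkLLRR_inv {r} (tau : {perm V r}) (a b c d : V r) : tau 0 = 0 ->
  a != c -> b != d -> [set inl a; inl c; inr b; inr d] \in SQS tau -> tau (a + c) = b + d.
Proof.
move=> t0 Hac Hbd; rewrite SQS_E // /blkA QL_LLRR QR_LLRR !sum2 // => /and4P[_ _ _ /eqP].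
done.
Qed.

Definition isl {r} (p : P r) : bool := if p is inl _ then true else false.
Definition EvenP {r} (S : {set {set P r}}) (z : P r -> bool) :=
  forall Q, Q \in S -> ~~ odd #|[set p in Q | z p]|.
Definition ParP {r} (S : {set {set P r}}) (z : P r -> bool) :=
  forall p q p' q' u v, z p -> z q -> ~~ z p' -> ~~ z q' -> z u -> z v ->
    [set p; q; p'; q'] \in S -> [set p; q; u; v] \in S -> [set u; v; p'; q'] \in S.

Lemma card_filter_sum (T : finType) (A : {set T}) (z : T -> bool) :
  #|[set p in A | z p]| = (\sum_(p in A) z p)%N.
Proof.
rewrite -sum1_card [LHS]big_mkcond [RHS]big_mkcond; apply: eq_bigr => p _.
by rewrite !inE; case: (p \in A); case: (z p).
Qed.

Lemma odd_filter4 (T : finType) (z : T -> bool) (x1 x2 x3 x4 : T) : uniq [:: x1; x2; x3; x4] ->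
  odd #|[set p in [set x1; x2; x3; x4] | z p]| = z x1 (+) z x2 (+) z x3 (+) z x4.
Proof. by move=> U; rewrite card_filter_sum sumn4 // !oddD !oddb. Qed.

Lemma X_even {r} (sig : {perm V r}) : sig 0 = 0 -> EvenP (SQS sig) isl.
Proof.
move=> s0 Q; rewrite SQS_E // => /and4P[_ HL _ _].
suff -> : [set p in Q | isl p] = [set inl a | a in QL Q] by rewrite card_imset //; apply: inl_inj.
apply/setP => -[x|x]; rewrite !inE /=.
  by rewrite andbT (mem_imset _ _ (@inl_inj _ _)) inE.
by rewrite andbF; apply/esym/imsetP => -[y].
Qed.

Lemma card4_uniq (T : finType) (x1 x2 x3 x4 : T) :
  #|[set x1; x2; x3; x4]| = 4%N -> uniq [:: x1; x2; x3; x4].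
Proof. by rewrite (eq_card (set4_mem x1 x2 x3 x4)) => H; apply/card_uniqP; rewrite H. Qed.

Lemma blk_uniq {r} (tau : {perm V r}) (x1 x2 x3 x4 : P r) : tau 0 = 0 ->
  [set x1; x2; x3; x4] \in SQS tau -> uniq [:: x1; x2; x3; x4].
Proof. by move=> t0; rewrite SQS_E // => /and4P[/eqP H _ _ _]; apply: card4_uniq. Qed.

Lemma X_par {r} (sig : {perm V r}) : sig 0 = 0 -> ParP (SQS sig) isl.
Proof.
move=> s0 [a|//] [c|//] [//|b] [//|d] [u|//] [v|//] _ _ _ _ _ _ B1 B2.
have := blk_uniq s0 B1; rewrite uniq4E => /and5P[Hac _ _ _ /andP[_ Hbd]].
have := blk_uniq s0 B2; rewrite uniq4E => /and5P[_ _ _ _ /andP[_ Huv]].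
have U2 : uniq [:: a; c; u; v] by move: (blk_uniq s0 B2); rewrite !uniq4E.
have E1 := blkLLRR_inv s0 Hac Hbd B1.
have E2 := blkLLLL_inv s0 U2 B2.
have E3 : u + v = a + c.
  apply/eqP; rewrite eq_sym -addv_eq0; apply/eqP; by rewrite !addrA.
by apply: blkLLRR => //; rewrite E3.
Qed.

Lemma imset_permK {T : finType} (p : {perm T}) (Q : {set T}) : (p^-1)%g @: (p @: Q) = Q.
Proof. by apply/setP => i; rewrite !mem_imset_perm invgK permK. Qed.
Lemma imset_permKV {T : finType} (p : {perm T}) (Q : {set T}) : p @: ((p^-1)%g @: Q) = Q.
Proof. by apply/setP => i; rewrite !mem_imset_perm invgK permKV. Qed.

Lemma sqs_mem {r} (p : {perm P r}) S1 S2 Q : sqs_equiv p S1 S2 -> (Q \in S1) = (p @: Q \in S2).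
Proof.
move=> <-; apply/idP/imsetP; first by move=> H; exists Q.
by case=> Q1 H1 /(imset_inj (@perm_inj _ p)) ->.
Qed.

Lemma sqs_sym {r} (p : {perm P r}) S1 S2 : sqs_equiv p S1 S2 -> sqs_equiv (p^-1)%g S2 S1.
Proof.
move=> H; rewrite /sqs_equiv; apply/setP => Q; apply/imsetP/idP.
  by case=> Q' HQ' ->; rewrite (sqs_mem _ H) imset_permKV.
by move=> HQ; exists (p @: Q); [rewrite -(sqs_mem _ H) | rewrite imset_permK].
Qed.

Lemma even_transport {r} (p : {perm P r}) S1 S2 z :
  sqs_equiv p S1 S2 -> EvenP S2 z -> EvenP S1 (fun x => z (p x)).
Proof.
move=> H E2 Q HQ; rewrite (sqs_mem _ H) in HQ; have := E2 _ HQ.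
suff -> : [set x in p @: Q | z x] = p @: [set x in Q | z (p x)] by rewrite card_imset_perm.
by apply/setP => i; rewrite mem_imset_perm !inE mem_imset_perm permKV.
Qed.

Lemma par_transport {r} (p : {perm P r}) S1 S2 z :
  sqs_equiv p S1 S2 -> ParP S2 z -> ParP S1 (fun x => z (p x)).
Proof.
move=> H P2 a b a' b' u v ? ? ? ? ? ?; rewrite !(sqs_mem _ H) !imset4; exact: P2.
Qed.

Definition additive_t {r} (tau : {perm V r}) := forall s t, tau (s + t) = tau s + tau t.

Lemma boolxor4 (x0 xa xb xab : bool) : ~~ (x0 (+) xa (+) xb (+) xab) ->
  xab (+) x0 = (xa (+) x0) (+) (xb (+) x0).
Proof. by case: x0; case: xa; case: xb; case: xab. Qed.

Lemma lemM {r} (tau : {perm V r}) (z : P r -> bool) : tau 0 = 0 ->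
  EvenP (SQS tau) z -> ParP (SQS tau) z ->
  (exists a1, z (inl a1)) -> (exists a2, ~~ z (inl a2)) -> additive_t tau.
Proof.
move=> t0 Ev Pa [a1 Ha1] [a2 Ha2].
pose fA a := z (inl a); pose fB b := z (inr b).
pose g a := fA a (+) fA 0; pose gB b := fB b (+) fB 0.
have g0 : g 0 = false by rewrite /g addbb.
have gB0 : gB 0 = false by rewrite /gB addbb.
have gadd : forall a b, g (a + b) = g a (+) g b.
  move=> a b; have [->|a0] := eqVneq a 0; first by rewrite add0r g0.
  have [->|b0] := eqVneq b 0; first by rewrite addr0 g0 addbF.
  have [->|ab] := eqVneq a b; first by rewrite addvv g0 addbb.
  have U : uniq [:: 0; a; b; a + b].
    rewrite uniq4E eq_sym a0 eq_sym b0 eq_sym addv_eq0 ab /=.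
    rewrite -{1}[a]addr0 (inj_eq (addrI a)) eq_sym b0 /=.
    by rewrite -{1}[b]add0r (inj_eq (addIr b)) eq_sym a0.
  have E0 : 0 + a + b + (a + b) = 0 by rewrite add0r addvv.
  have := Ev _ (blkLLLL t0 U E0).
  rewrite odd_filter4 ?uniq4_inl //; exact: boolxor4.
have gBadd : forall a b, gB (a + b) = gB a (+) gB b.
  move=> a b; have [->|a0] := eqVneq a 0; first by rewrite add0r gB0.
  have [->|b0] := eqVneq b 0; first by rewrite addr0 gB0 addbF.
  have [->|ab] := eqVneq a b; first by rewrite addvv gB0 addbb.
  have U : uniq [:: 0; a; b; a + b].
    rewrite uniq4E eq_sym a0 eq_sym b0 eq_sym addv_eq0 ab /=.
    rewrite -{1}[a]addr0 (inj_eq (addrI a)) eq_sym b0 /=.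
    by rewrite -{1}[b]add0r (inj_eq (addIr b)) eq_sym a0.
  have E0 : 0 + a + b + (a + b) = 0 by rewrite add0r addvv.
  have := Ev _ (blkRRRR t0 U E0).
  rewrite odd_filter4 ?uniq4_inr //; exact: boolxor4.
have gtau : forall s, g s = gB (tau s).
  move=> s; have [->|s0] := eqVneq s 0; first by rewrite t0 g0 gB0.
  have ts0 : tau s != 0 by rewrite perm0.
  have E0 : tau (s + 0) = tau s + 0 by rewrite !addr0.
  have B := blkLLRR t0 s0 ts0 E0.
  have := Ev _ B; rewrite odd_filter4 ?uniq4_LLRR //.
  by rewrite /g /gB /fA /fB; case: (z (inl s)); case: (z (inl 0)); case: (z (inr (tau s))); case: (z (inr 0)).
have fAadd : forall a s, fA (a + s) = fA a (+) g s.
  move=> a s; have := gadd a s; rewrite /g => H.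
  by move: H; case: (fA (a + s)); case: (fA a); case: (fA s); case: (fA 0).
have fBadd : forall a s, fB (a + s) = fB a (+) gB s.
  move=> a s; have := gBadd a s; rewrite /gB => H.
  by move: H; case: (fB (a + s)); case: (fB a); case: (fB s); case: (fB 0).
pose s0 := a1 + a2.
have gs0 : g s0 = true.
  by rewrite /s0 gadd /g /fA; move: Ha1 Ha2; case: (z (inl a1)); case: (z (inl a2)); case: (z (inl 0)).
have [b1 Hb1] : exists b1, fB b1.
  have := gtau s0; rewrite gs0 /gB; case E: (fB 0); first by exists 0.
  by rewrite addbF => H; exists (tau s0).
have key : forall s t, g s -> ~~ g t -> tau (s + t) = tau s + tau t.
  move=> s t gs gt; have [->|tn0] := eqVneq t 0; first by rewrite addr0 t0 addr0.
  have sn0 : s != 0 by apply: contraTneq gs => ->; rewrite g0.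
  have tsn0 : tau s != 0 by rewrite perm0.
  have ttn0 : tau t != 0 by rewrite perm0.
  have Hst : a1 + t != a1 + s.
    rewrite (inj_eq (addrI a1)); apply: contraNneq gt => ->; exact: gs.
  have Htst : b1 + tau t != b1 + tau s.
    rewrite (inj_eq (addrI b1)) (inj_eq perm_inj); apply: contraNneq gt => ->; exact: gs.
  have C1 : a1 != a1 + s by rewrite -{1}[a1]addr0 (inj_eq (addrI a1)) eq_sym.
  have C2 : b1 != b1 + tau s by rewrite -{1}[b1]addr0 (inj_eq (addrI b1)) eq_sym.
  have C3 : a1 != a1 + t by rewrite -{1}[a1]addr0 (inj_eq (addrI a1)) eq_sym.
  have C4 : b1 != b1 + tau t by rewrite -{1}[b1]addr0 (inj_eq (addrI b1)) eq_sym.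
  have B1 : [set inl a1; inr b1; inl (a1 + s); inr (b1 + tau s)] \in SQS tau.
    by rewrite set4_swap23; apply: blkLLRR => //; rewrite !addrA !addvv !add0r.
  have B2 : [set inl a1; inr b1; inl (a1 + t); inr (b1 + tau t)] \in SQS tau.
    by rewrite set4_swap23; apply: blkLLRR => //; rewrite !addrA !addvv !add0r.
  have Z1 : ~~ z (inl (a1 + s)) by rewrite -/(fA _) fAadd /fA Ha1 gs.
  have Z2 : ~~ z (inr (b1 + tau s)) by rewrite -/(fB _) fBadd -gtau Hb1 gs.
  have Z3 : z (inl (a1 + t)) by rewrite -/(fA _) fAadd /fA Ha1 (negbTE gt).
  have Z4 : z (inr (b1 + tau t)) by rewrite -/(fB _) fBadd -gtau Hb1 (negbTE gt).
  have := Pa _ _ _ _ _ _ Ha1 Hb1 Z1 Z2 Z3 Z4 B1 B2.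
  rewrite set4_swap23 => B3.
  have := blkLLRR_inv t0 Hst Htst B3.
  by rewrite [a1 + t + _]addrACA [b1 + _ + _]addrACA !addvv !add0r [s + t]addrC [tau s + _]addrC.
move=> s t.
case gs: (g s); case gt: (g t).
- pose u := s + t.
  have gu : g u = false by rewrite /u gadd gs gt.
  have Et : t = s + u by rewrite /u addrA addvv add0r.
  have := key s u gs (negbT gu); rewrite -Et => H.
  by rewrite -/u (solve2 H).
- by apply: key; rewrite ?gs ?gt.
- by rewrite addrC [tau s + _]addrC; apply: key; rewrite ?gs ?gt.
- have g1 : g (s0 + s) by rewrite gadd gs0 gs.
  have H1 := key _ _ g1 (negbT gt).
  have g2 : g (s + t) = false by rewrite gadd gs gt.
  have H2 := key _ _ gs0 (negbT g2).
  have H3 := key _ _ gs0 (negbT gs).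
  rewrite -addrA H2 H3 -addrA in H1.
  by move/addrI: H1.
Qed.

Definition supp {r} (c : W2 r) : {set P r} := [set i | c i != 0].

Lemma F2_neq0 (k : 'F_2) : (k != 0) = (k == 1).
Proof. by case: (F2_cases k) => ->. Qed.

Lemma supp_add {r} (c : W2 r) (Q : {set P r}) :
  supp (c + ind Q) = (supp c :\: Q) :|: (Q :\: supp c).
Proof.
apply/setP => i; rewrite !inE !ffunE.
by case: (F2_cases (c i)) => ->; case: (i \in Q) => //=; rewrite F2_11.
Qed.

Lemma wt_drop {r} (c : W2 r) (Q : {set P r}) (x1 x2 x3 : P r) :
  #|Q| = 4%N -> uniq [:: x1; x2; x3] -> x1 \in Q -> x2 \in Q -> x3 \in Q ->
  x1 \in supp c -> x2 \in supp c -> x3 \in supp c ->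
  (#|supp (c + ind Q)%R| < #|supp c|)%N.
Proof.
move=> H4 U h1 h2 h3 s1 s2 s3.
have H3 : (3 <= #|supp c :&: Q|)%N.
  have -> : 3%N = #|[:: x1; x2; x3]| by apply/esym/card_uniqP.
  apply: subset_leq_card; apply/subsetP => x Hx; apply/setIP; move: Hx.
  by rewrite !in_cons in_nil orbF => /or3P[] /eqP ->; split.
have HQ : (#|supp c :&: Q| <= 4)%N by rewrite -H4 subset_leq_card // subsetIr.
have HS : (#|supp c :&: Q| <= #|supp c|)%N by rewrite subset_leq_card // subsetIl.
rewrite supp_add; apply: (leq_ltn_trans (leq_card_setU _ _)).
rewrite !cardsD [Q :&: _]setIC H4; lia.
Qed.

Lemma pick3 (T : finType) (S : {set T}) : (3 <= #|S|)%N ->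
  exists a b e, [/\ uniq [:: a; b; e], a \in S, b \in S & e \in S].
Proof.
move=> H; have U := enum_uniq (mem S); have E : (3 <= size (enum S))%N by rewrite -cardE.
have EE : forall x, (x \in enum S) = (x \in S) by move=> x; rewrite mem_enum.
move: U E EE; case: (enum S) => [|a [|b [|e s]]] // U _ EE.
exists a, b, e; split; rewrite -?EE ?inE ?eqxx ?orbT //.
by move: U => /= /andP[Ha /andP[Hb _]]; rewrite /= !inE; move: Ha Hb; rewrite !inE !negb_or => /andP[-> /andP[-> _]] /andP[-> _].
Qed.

Lemma syn_supp {r} (x : W r) : syn x = \sum_(a in [set a | x a != 0]) a.
Proof.
rewrite -sum_cond_syn; apply: eq_bigl => a; rewrite inE F2_neq0 //.
Qed.

Lemma code_add {r} (tau : {perm V r}) (c1 c2 : W2 r) : tau 0 = 0 -> additive_t tau ->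
  c1 \in Sc tau -> c2 \in Sc tau -> c1 + c2 \in Sc tau.
Proof.
move=> t0 At; rewrite !Sc_E // /codeA.
have -> : lft (c1 + c2) = lft c1 + lft c2 by apply/ffunP => a; rewrite !ffunE.
have -> : rgt (c1 + c2) = rgt c1 + rgt c2 by apply/ffunP => a; rewrite !ffunE.
move=> /and3P[/eqP p1 /eqP q1 /eqP e1] /and3P[/eqP p2 /eqP q2 /eqP e2].
by rewrite !parD !synD p1 q1 p2 q2 At e1 e2 addr0 !eqxx.
Qed.

Lemma addv_neq {r} (a s : V r) : s != 0 -> a != a + s.
Proof. by move=> H; rewrite -{1}[a]addr0 (inj_eq (addrI a)) eq_sym. Qed.

Lemma uniq_abe {r} (a b e : V r) : uniq [:: a; b; e] -> uniq [:: a; b; e; a + b + e].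
Proof.
rewrite /= !inE !negb_or andbT => /andP[/andP[ab ae] be].
rewrite ab ae be /= !andbT.
have h1 : (a + b + e == a) = (b == e)
  by rewrite -addrA -{2}[a]addr0 (inj_eq (addrI a)) addv_eq0.
have h2 : (a + b + e == b) = (a == e)
  by rewrite addrAC -{2}[b]add0r (inj_eq (addIr b)) addv_eq0.
have h3 : (a + b + e == e) = (a == b)
  by rewrite -{2}[e]add0r (inj_eq (addIr e)) addv_eq0.
by rewrite ![_ == a + b + e]eq_sym h1 h2 h3 ab ae be.
Qed.

Lemma decomp {r} (tau : {perm V r}) (c : W2 r) : tau 0 = 0 ->
  c \in Sc tau -> c != 0 ->
  exists Q, Q \in SQS tau /\ (#|supp (c + ind Q)%R| < #|supp c|)%N.
Proof.
move=> t0 Hc cn0.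
have := Hc; rewrite Sc_E // /codeA !par_wt !syn_supp => /and3P[pL pR /eqP Hs].
set xL := [set a | lft c a != 0] in pL Hs; set xR := [set a | rgt c a != 0] in pR Hs.
have wL : wt (lft c) = #|xL| by []. have wR : wt (rgt c) = #|xR| by [].
rewrite wL wR !oddF2 in pL pR.
have inL : forall a, (a \in xL) = (inl a \in supp c) by move=> a; rewrite !inE ffunE.
have inR : forall a, (a \in xR) = (inr a \in supp c) by move=> a; rewrite !inE ffunE.
have [L3|L3] := leqP 3 #|xL|.
  case: (pick3 L3) => a [b [e [U ha hb he]]].
  have U4 : uniq [:: a; b; e; a + b + e].
    exact: uniq_abe.
  exists [set inl a; inl b; inl e; inl (a + b + e)]; split.
    by apply: blkLLLL => //; rewrite addvv.
  have H4 : #|([set inl a; inl b; inl e; inl (a + b + e)] : {set P r})| = 4%N by rewrite card4 // uniq4_inl.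
  have U3 : uniq ([:: inl a; inl b; inl e] : seq (P r)) by move: U; rewrite /= !inE.
  apply: (wt_drop H4 U3); try by rewrite !inE eqxx ?orbT.
  - by have := ha; rewrite inL.
  - by have := hb; rewrite inL.
  - by have := he; rewrite inL.
have [R3|R3] := leqP 3 #|xR|.
  case: (pick3 R3) => a [b [e [U ha hb he]]].
  have U4 : uniq [:: a; b; e; a + b + e].
    exact: uniq_abe.
  exists [set inr a; inr b; inr e; inr (a + b + e)]; split.
    by apply: blkRRRR => //; rewrite addvv.
  have H4 : #|([set inr a; inr b; inr e; inr (a + b + e)] : {set P r})| = 4%N by rewrite card4 // uniq4_inr.
  have U3 : uniq ([:: inr a; inr b; inr e] : seq (P r)) by move: U; rewrite /= !inE.
  apply: (wt_drop H4 U3); try by rewrite !inE eqxx ?orbT.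
  - by have := ha; rewrite inR.
  - by have := hb; rewrite inR.
  - by have := he; rewrite inR.
have [L2|L2] := eqVneq #|xL| 2%N.
  case/cards2P: (introT eqP L2) => a [e [ae EL]].
  rewrite EL sum2 // in Hs.
  have tn0 : tau (a + e) != 0 by rewrite (perm0 _ t0) addv_eq0.
  have : xR != set0 by apply: contra_neq tn0 => E; rewrite Hs E big_set0.
  case/set0Pn => b hb.
  exists [set inl a; inl e; inr b; inr (b + tau (a + e))]; split.
    by apply: blkLLRR => //; [exact: addv_neq | rewrite addrA addvv add0r].
  have H4 : #|([set inl a; inl e; inr b; inr (b + tau (a + e))] : {set P r})| = 4%N.
    by rewrite card4 // uniq4_LLRR // addv_neq.
  have U3 : uniq ([:: inl a; inl e; inr b] : seq (P r)) by rewrite /= !inE !negb_or /= ae.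
  apply: (wt_drop H4 U3); try by rewrite !inE eqxx ?orbT.
  - by have := inL a; rewrite EL !inE eqxx => <-.
  - by have := inL e; rewrite EL !inE eqxx orbT => <-.
  - by have := hb; rewrite inR.
have L0 : #|xL| = 0%N by move: pL L2 L3; case: (#|xL|) => [|[|[|n]]].
have XL : xL = set0 by apply/eqP; rewrite -cards_eq0 L0.
rewrite XL big_set0 t0 in Hs.
have [R2|R2] := eqVneq #|xR| 2%N.
  case/cards2P: (introT eqP R2) => b [d [bd ER]].
  by move: Hs; rewrite ER sum2 // => /eqP; rewrite eq_sym addv_eq0 (negbTE bd).
have R0 : #|xR| = 0%N by move: pR R2 R3; case: (#|xR|) => [|[|[|n]]].
have XR : xR = set0 by apply/eqP; rewrite -cards_eq0 R0.
exfalso; move/eqP: cn0; apply; apply/ffunP => -[a|a]; rewrite ffunE.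
  by apply/eqP; move: (inL a); rewrite XL inE !inE => /esym/negbT; rewrite negbK.
by apply/eqP; move: (inR a); rewrite XR inE !inE => /esym/negbT; rewrite negbK.
Qed.

Lemma lin_case {r} (tau tau' : {perm V r}) (rho : {perm P r}) :
  tau 0 = 0 -> tau' 0 = 0 -> additive_t tau -> additive_t tau' ->
  sqs_equiv rho (SQS tau) (SQS tau') ->
  forall c, c \in Sc tau -> permw rho c \in Sc tau'.
Proof.
move=> t0 t0' At At' Hq c; have [n] := ubnP #|supp c|; elim: n c => // n IH c Hn Hc.
have [->|cn0] := eqVneq c 0; first by rewrite permw0 zero_Sc.
case: (decomp t0 Hc cn0) => Q [HQ Hw].
have := HQ; rewrite SQS_ind // => /andP[_ HiQ].
have Hc' : c + ind Q \in Sc tau by apply: code_add.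
have Hl : (#|supp (c + ind Q)%R| < n)%N by move: Hn Hw; clear; lia.
have E : c = (c + ind Q) + ind Q by rewrite -addrA addWW addr0.
rewrite E permwD -ind_imset; apply: code_add => //; first exact: IH.
have : rho @: Q \in SQS tau' by rewrite -(sqs_mem _ Hq).
by rewrite SQS_ind // => /andP[].
Qed.

Lemma lin_sum {r} (h : V r -> V r) (x : W r) : (forall a b, h (a + b) = h a + h b) ->
  \sum_a x a *: h a = h (syn x).
Proof.
move=> hadd; have h0 : h 0 = 0.
  by apply: (addrI (h 0)); rewrite -hadd !addr0.
rewrite /syn (big_morph h hadd h0); apply: eq_bigr => a _.
by case: (F2_cases (x a)) => ->; rewrite ?scale0r ?scale1r.
Qed.

Lemma sum_affine {r} (s : V r -> V r) (x : W r) :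
  (forall a b, s (a + b) + s 0 = (s a + s 0) + (s b + s 0)) -> par x = 0 ->
  \sum_a x a *: s a = (fun a => s a + s 0) (syn x).
Proof.
move=> sadd px; rewrite -lin_sum //.
rewrite [LHS](eq_bigr (fun a => x a *: (s a + s 0) + x a *: s 0)); last first.
  by move=> a _; rewrite -scalerDr -addrA addvv addr0.
by rewrite big_split /= -scaler_suml -/(par x) px scale0r addr0.
Qed.

Lemma reidx_l {r} (rho : {perm P r}) (k : V r -> P r) (s : V r -> V r) (c : W2 r) :
  injective s -> (forall a, rho (k a) = inl (s a)) ->
  syn (lft (permw rho c)) = \sum_a c (k a) *: s a /\
  par (lft (permw rho c)) = \sum_a c (k a).
Proof.
move=> si E; rewrite /syn /par; split; rewrite (reindex_inj si) /=;
  apply: eq_bigr => a _; rewrite !ffunE -E permK //.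
Qed.
Lemma reidx_r {r} (rho : {perm P r}) (k : V r -> P r) (s : V r -> V r) (c : W2 r) :
  injective s -> (forall a, rho (k a) = inr (s a)) ->
  syn (rgt (permw rho c)) = \sum_a c (k a) *: s a /\
  par (rgt (permw rho c)) = \sum_a c (k a).
Proof.
move=> si E; rewrite /syn /par; split; rewrite (reindex_inj si) /=;
  apply: eq_bigr => a _; rewrite !ffunE -E permK //.
Qed.

Lemma affine_of {r} (s : V r -> V r) :
  (forall a b, a != 0 -> b != 0 -> a != b -> s 0 + s a + s b + s (a + b) = 0) ->
  forall a b, s (a + b) + s 0 = (s a + s 0) + (s b + s 0).
Proof.
move=> H a b.
have [->|a0] := eqVneq a 0; first by rewrite add0r addvv add0r.
have [->|b0] := eqVneq b 0; first by rewrite addr0 addvv addr0.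
have [->|ab] := eqVneq a b; first by rewrite !addvv.
have E : s (a + b) = s 0 + s a + s b.
  by apply/eqP; rewrite -addv_eq0 addrC (H a b a0 b0 ab).
by rewrite E addrA [s 0 + s a]addrC.
Qed.

Lemma uniq0ab {r} (a b : V r) : a != 0 -> b != 0 -> a != b -> uniq [:: 0; a; b; a + b].
Proof.
move=> a0 b0 ab.
rewrite uniq4E eq_sym a0 eq_sym b0 eq_sym addv_eq0 ab /=.
rewrite -{1}[a]addr0 (inj_eq (addrI a)) eq_sym b0 /=.
by rewrite -{1}[b]add0r (inj_eq (addIr b)) eq_sym a0.
Qed.

Lemma uniq_map4 (T T' : eqType) (f : T -> T') (a b c d : T) : injective f ->
  uniq [:: a; b; c; d] -> uniq [:: f a; f b; f c; f d].
Proof. by move=> fi U; rewrite -(map_inj_uniq fi) in U. Qed.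

Lemma set4_swap_pairs (T : finType) (x1 x2 x3 x4 : T) :
  [set x1; x2; x3; x4] = [set x3; x4; x1; x2].
Proof. by apply/setP => x; rewrite !inE; case: (x == x1); case: (x == x2); case: (x == x3); case: (x == x4). Qed.

Lemma caseA {r} (tau tau' : {perm V r}) (rho : {perm P r}) (s1 s2 : V r -> V r) :
  tau 0 = 0 -> tau' 0 = 0 -> sqs_equiv rho (SQS tau) (SQS tau') ->
  (forall a, rho (inl a) = inl (s1 a)) -> (forall b, rho (inr b) = inr (s2 b)) ->
  forall c, c \in Sc tau -> permw rho c \in Sc tau'.
Proof.
move=> t0 t0' Hq E1 E2.
have s1i : injective s1.
  move=> a b H; have : rho (inl a) = rho (inl b) by rewrite !E1 H.
  by move/perm_inj => [].
have s2i : injective s2.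
  move=> a b H; have : rho (inr a) = rho (inr b) by rewrite !E2 H.
  by move/perm_inj => [].
have s1a : forall a b, s1 (a + b) + s1 0 = (s1 a + s1 0) + (s1 b + s1 0).
  apply: affine_of => a b a0 b0 ab.
  have U := uniq0ab a0 b0 ab.
  have E0 : 0 + a + b + (a + b) = 0 by rewrite add0r addvv.
  have B := blkLLLL t0 U E0.
  rewrite (sqs_mem _ Hq) imset4 !E1 in B.
  exact: (blkLLLL_inv t0' (uniq_map4 s1i U) B).
have s2a : forall a b, s2 (a + b) + s2 0 = (s2 a + s2 0) + (s2 b + s2 0).
  apply: affine_of => a b a0 b0 ab.
  have U := uniq0ab a0 b0 ab.
  have E0 : 0 + a + b + (a + b) = 0 by rewrite add0r addvv.
  have B := blkRRRR t0 U E0.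
  rewrite (sqs_mem _ Hq) imset4 !E2 in B.
  exact: (blkRRRR_inv t0' (uniq_map4 s2i U) B).
have comp : forall s, tau' (s1 s + s1 0) = s2 (tau s) + s2 0.
  move=> s; have [->|s0] := eqVneq s 0; first by rewrite t0 !addvv t0'.
  have ts0 : tau s != 0 by rewrite perm0.
  have E0 : tau (s + 0) = tau s + 0 by rewrite !addr0.
  have B := blkLLRR t0 s0 ts0 E0.
  rewrite (sqs_mem _ Hq) imset4 !E1 !E2 in B.
  apply: (blkLLRR_inv t0' _ _ B).
    by rewrite (inj_eq s1i).
  by rewrite (inj_eq s2i).
move=> c; rewrite !Sc_E // /codeA => /and3P[/eqP pL /eqP pR /eqP Hs].
have [Sl Pl] := reidx_l c s1i E1.
have [Sr Pr] := reidx_r c s2i E2.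
have Pl' : par (lft (permw rho c)) = par (lft c) by rewrite Pl; apply: eq_bigr => a _; rewrite ffunE.
have Pr' : par (rgt (permw rho c)) = par (rgt c) by rewrite Pr; apply: eq_bigr => a _; rewrite ffunE.
have Sl' : syn (lft (permw rho c)) = s1 (syn (lft c)) + s1 0.
  by rewrite Sl -(sum_affine s1a pL); apply: eq_bigr => a _; rewrite ffunE.
have Sr' : syn (rgt (permw rho c)) = s2 (syn (rgt c)) + s2 0.
  by rewrite Sr -(sum_affine s2a pR); apply: eq_bigr => a _; rewrite ffunE.
by rewrite Pl' Pr' Sl' Sr' pL pR comp Hs !eqxx.
Qed.

Lemma caseB {r} (tau tau' : {perm V r}) (rho : {perm P r}) (s1 s2 : V r -> V r) :
  tau 0 = 0 -> tau' 0 = 0 -> sqs_equiv rho (SQS tau) (SQS tau') ->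
  (forall a, rho (inl a) = inr (s1 a)) -> (forall b, rho (inr b) = inl (s2 b)) ->
  forall c, c \in Sc tau -> permw rho c \in Sc tau'.
Proof.
move=> t0 t0' Hq E1 E2.
have s1i : injective s1.
  move=> a b H; have : rho (inl a) = rho (inl b) by rewrite !E1 H.
  by move/perm_inj => [].
have s2i : injective s2.
  move=> a b H; have : rho (inr a) = rho (inr b) by rewrite !E2 H.
  by move/perm_inj => [].
have s1a : forall a b, s1 (a + b) + s1 0 = (s1 a + s1 0) + (s1 b + s1 0).
  apply: affine_of => a b a0 b0 ab.
  have U := uniq0ab a0 b0 ab.
  have E0 : 0 + a + b + (a + b) = 0 by rewrite add0r addvv.
  have B := blkLLLL t0 U E0.
  rewrite (sqs_mem _ Hq) imset4 !E1 in B.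
  exact: (blkRRRR_inv t0' (uniq_map4 s1i U) B).
have s2a : forall a b, s2 (a + b) + s2 0 = (s2 a + s2 0) + (s2 b + s2 0).
  apply: affine_of => a b a0 b0 ab.
  have U := uniq0ab a0 b0 ab.
  have E0 : 0 + a + b + (a + b) = 0 by rewrite add0r addvv.
  have B := blkRRRR t0 U E0.
  rewrite (sqs_mem _ Hq) imset4 !E2 in B.
  exact: (blkLLLL_inv t0' (uniq_map4 s2i U) B).
have comp : forall s, tau' (s2 (tau s) + s2 0) = s1 s + s1 0.
  move=> s; have [->|s0] := eqVneq s 0; first by rewrite t0 !addvv t0'.
  have ts0 : tau s != 0 by rewrite perm0.
  have E0 : tau (s + 0) = tau s + 0 by rewrite !addr0.
  have B := blkLLRR t0 s0 ts0 E0.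
  rewrite (sqs_mem _ Hq) imset4 !E1 !E2 set4_swap_pairs in B.
  apply: (blkLLRR_inv t0' _ _ B).
    by rewrite (inj_eq s2i).
  by rewrite (inj_eq s1i).
move=> c; rewrite !Sc_E // /codeA => /and3P[/eqP pL /eqP pR /eqP Hs].
have [Sl Pl] := reidx_l c s2i E2.
have [Sr Pr] := reidx_r c s1i E1.
have Pl' : par (lft (permw rho c)) = par (rgt c) by rewrite Pl; apply: eq_bigr => a _; rewrite ffunE.
have Pr' : par (rgt (permw rho c)) = par (lft c) by rewrite Pr; apply: eq_bigr => a _; rewrite ffunE.
have Sl' : syn (lft (permw rho c)) = s2 (syn (rgt c)) + s2 0.
  by rewrite Sl -(sum_affine s2a pR); apply: eq_bigr => a _; rewrite ffunE.
have Sr' : syn (rgt (permw rho c)) = s1 (syn (lft c)) + s1 0.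
  by rewrite Sr -(sum_affine s1a pL); apply: eq_bigr => a _; rewrite ffunE.
by rewrite Pl' Pr' Sl' Sr' pL pR -Hs comp !eqxx.
Qed.

Lemma all_inl {r} (rho : {perm P r}) : (forall a, isl (rho (inl a))) ->
  forall x, exists a, rho (inl a) = inl x.
Proof.
move=> H.
pose s1 a := if rho (inl a) is inl x then x else 0.
have E1 : forall a, rho (inl a) = inl (s1 a) by move=> a; rewrite /s1; move: (H a); case: (rho (inl a)).
have s1i : injective s1.
  move=> a b Hab; have : rho (inl a) = rho (inl b) by rewrite !E1 Hab.
  by move/perm_inj => [].
case: (injF_bij s1i) => g _ gK x; exists (g x); by rewrite E1 gK.
Qed.

Lemma all_inr {r} (rho : {perm P r}) : (forall a, ~~ isl (rho (inl a))) ->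
  forall x, exists a, rho (inl a) = inr x.
Proof.
move=> H.
pose s1 a := if rho (inl a) is inr x then x else 0.
have E1 : forall a, rho (inl a) = inr (s1 a) by move=> a; rewrite /s1; move: (H a); case: (rho (inl a)).
have s1i : injective s1.
  move=> a b Hab; have : rho (inl a) = rho (inl b) by rewrite !E1 Hab.
  by move/perm_inj => [].
case: (injF_bij s1i) => g _ gK x; exists (g x); by rewrite E1 gK.
Qed.

Lemma keyK {r} (tau tau' : {perm V r}) (rho : {perm P r}) :
  tau 0 = 0 -> tau' 0 = 0 -> sqs_equiv rho (SQS tau) (SQS tau') ->
  forall c, c \in Sc tau -> permw rho c \in Sc tau'.
Proof.
move=> t0 t0' Hq.
case: (boolP [forall a, isl (rho (inl a))]) => [/forallP HA|nA].
  have HR : forall b, ~~ isl (rho (inr b)).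
    move=> b; case E: (rho (inr b)) => [x|x] //=.
    case: (all_inl HA x) => a Ea.
    by move: E; rewrite -Ea => /perm_inj.
  pose s1 a := if rho (inl a) is inl x then x else 0.
  pose s2 b := if rho (inr b) is inr x then x else 0.
  apply: (caseA (s1 := s1) (s2 := s2) t0 t0' Hq).
    by move=> a; rewrite /s1; move: (HA a); case: (rho (inl a)).
  by move=> b; rewrite /s2; move: (HR b); case: (rho (inr b)).
case: (boolP [forall a, ~~ isl (rho (inl a))]) => [/forallP HB|nB].
  have HR : forall b, isl (rho (inr b)).
    move=> b; case E: (rho (inr b)) => [x|x] //=.
    case: (all_inr HB x) => a Ea.
    by move: E; rewrite -Ea => /perm_inj.
  pose s1 a := if rho (inl a) is inr x then x else 0.
  pose s2 b := if rho (inr b) is inl x then x else 0.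
  apply: (caseB (s1 := s1) (s2 := s2) t0 t0' Hq).
    by move=> a; rewrite /s1; move: (HB a); case: (rho (inl a)).
  by move=> b; rewrite /s2; move: (HR b); case: (rho (inr b)).
move: nA; rewrite negb_forall => /existsP[a2 Ha2].
move: nB; rewrite negb_forall => /existsP[a1]; rewrite negbK => Ha1.
have At : additive_t tau.
  apply: (lemM (z := fun p => isl (rho p)) t0).
  - exact: (even_transport Hq (X_even t0')).
  - exact: (par_transport Hq (X_par t0')).
  - by exists a1.
  - by exists a2.
have Hq' := sqs_sym Hq.
have At' : additive_t tau'.
  apply: (lemM (z := fun p => isl ((rho^-1)%g p)) t0').
  - exact: (even_transport Hq' (X_even t0)).
  - exact: (par_transport Hq' (X_par t0)).
  - move: Ha1; case E: (rho (inl a1)) => [b1|b1] // _.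
    by exists b1; rewrite -E permK.
  - apply/existsP; rewrite -negb_forall; apply/negP => /forallP HA'.
    case: (all_inl HA' a2) => b Eb.
    by move: Ha2; rewrite -Eb permKV.
exact: lin_case.
Qed.

Lemma permw1 {r} (y : W2 r) : permw 1%g y = y.
Proof. by apply/ffunP => i; rewrite !ffunE invg1 perm1. Qed.

Theorem corollary3 (r : nat) (tau tau' : {perm V r}) :
  (1 <= r)%N -> tau 0 = 0 -> tau' 0 = 0 ->
  transitive_code (Sc tau) -> transitive_code (Sc tau') ->
  (exists (x : W2 r) (pi : {perm P r}), [set x + permw pi y | y in Sc tau] = Sc tau')
  <-> (exists pi' : {perm P r}, sqs_equiv pi' (SQS tau) (SQS tau')).
Proof.
move=> _ t0 t0' Tr _; split.
  move=> H; case: (dir1 t0 t0' Tr H) => rho Hr.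
  by exists rho; apply: code_to_sqs.
case=> p Hq; exists 0, p; apply/setP => c; apply/imsetP/idP.
  by case=> y Hy ->; rewrite add0r; apply: (keyK t0 t0' Hq).
move=> Hc; exists (permw (p^-1)%g c).
  exact: (keyK t0' t0 (sqs_sym Hq)).
by rewrite add0r -permwM mulVg permw1.
Qed.
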